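(* Let $(\Omega,\mathcal A)$ be a Borel space, $(X_\omega,d_\omega)_{\omega\in\Omega}$ a field of metric spaces, and $\mathcal L\subseteq\mathcal S(\Omega,X_\bullet)$ a set of sections satisfying: (a) $\omega\mapsto d_\omega(x_\omega,y_\omega)$ is Borel for all $x_\bullet,y_\bullet\in\mathcal L$, and (c) there is a countable family $\{x^n_\bullet\}_{n\ge1}\subseteq\mathcal L$ with $\{x^n_\omega\}_n$ dense in $X_\omega$ for every $\omega$. Then the following are equivalent: (b) if $y_\bullet\in\mathcal S(\Omega,X_\bullet)$ is such that $\omega\mapsto d_\omega(x_\omega,y_\omega)$ is Borel for all $x_\bullet\in\mathcal L$, then $y_\bullet\in\mathcal L$; (b') $\mathcal L$ is closed under pointwise limits and countable Borel gluings; (b'') $\mathcal L$ is closed under pointwise limits and finite Borel gluings.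
   Context: A section is a family $x_\bullet=(x_\omega)_{\omega\in\Omega}$ with $x_\omega\in X_\omega$; $\mathcal S(\Omega,X_\bullet)$ is the set of sections. If $(x^n_\bullet)_{n\ge1}$ are sections such that $(x^n_\omega)_n$ converges in $X_\omega$ for every $\omega$, the pointwise limit is the section $\omega\mapsto\lim_n x^n_\omega$. If $(x^n_\bullet)$ are sections and $\Omega=\bigsqcup_n\Omega_n$ is a countable (resp. finite) partition into Borel sets, the countable (resp. finite) Borel gluing is the section $x_\bullet$ with $x_\omega=x^n_\omega$ for $\omega\in\Omega_n$. *)

(* Defs.v *)
From Stdlib Require Import Reals.
Open Scope R_scope.

Record sigma_algebra (Om : Type) (A : (Om -> Prop) -> Prop) : Prop := {
  sa_full : A (fun _ => True);
  sa_compl : forall E, A E -> A (fun w => ~ E w);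
  sa_cunion : forall E : nat -> Om -> Prop,
      (forall n, A (E n)) -> A (fun w => exists n, E n w)
}.

Inductive borelR : (R -> Prop) -> Prop :=
| borelR_open : forall U, open_set U -> borelR U
| borelR_compl : forall U, borelR U -> borelR (fun x => ~ U x)
| borelR_cunion : forall U : nat -> R -> Prop,
    (forall n, borelR (U n)) -> borelR (fun x => exists n, U n x).

Definition borel_fun {Om : Type} (A : (Om -> Prop) -> Prop) (f : Om -> R) : Prop :=
  forall B, borelR B -> A (fun w => B (f w)).

Definition is_metric {T : Type} (d : T -> T -> R) : Prop :=
  (forall x y, 0 <= d x y) /\
  (forall x y, d x y = 0 <-> x = y) /\
  (forall x y, d x y = d y x) /\
  (forall x y z, d x z <= d x y + d y z).

Definition section {Om : Type} (X : Om -> Type) := forall w : Om, X w.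

Definition mconv {T : Type} (d : T -> T -> R) (u : nat -> T) (l : T) : Prop :=
  forall eps, 0 < eps -> exists N, forall n, (N <= n)%nat -> d (u n) l < eps.

Definition closed_pw_limits {Om : Type} {X : Om -> Type}
  (d : forall w, X w -> X w -> R) (L : section X -> Prop) : Prop :=
  forall (x : nat -> section X) (y : section X),
    (forall n, L (x n)) ->
    (forall w, mconv (d w) (fun n => x n w) (y w)) ->
    L y.

Definition closed_countable_gluing {Om : Type} {X : Om -> Type}
  (A : (Om -> Prop) -> Prop) (L : section X -> Prop) : Prop :=
  forall (P : nat -> Om -> Prop) (x : nat -> section X) (y : section X),
    (forall n, A (P n)) ->
    (forall w, exists n, P n w) ->
    (forall n m w, P n w -> P m w -> n = m) ->
    (forall n, L (x n)) ->
    (forall n w, P n w -> y w = x n w) ->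
    L y.

Definition closed_finite_gluing {Om : Type} {X : Om -> Type}
  (A : (Om -> Prop) -> Prop) (L : section X -> Prop) : Prop :=
  forall (N : nat) (P : nat -> Om -> Prop) (x : nat -> section X) (y : section X),
    (forall n, (n < N)%nat -> A (P n)) ->
    (forall w, exists n, (n < N)%nat /\ P n w) ->
    (forall n m w, (n < N)%nat -> (m < N)%nat -> P n w -> P m w -> n = m) ->
    (forall n, (n < N)%nat -> L (x n)) ->
    (forall n w, (n < N)%nat -> P n w -> y w = x n w) ->
    L y.

Definition prop_b {Om : Type} {X : Om -> Type} (A : (Om -> Prop) -> Prop)
  (d : forall w, X w -> X w -> R) (L : section X -> Prop) : Prop :=
  forall y : section X,
    (forall x, L x -> borel_fun A (fun w => d w (x w) (y w))) -> L y.

(* Main.v *)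
Require Import Defs.
From Stdlib Require Import Reals Lra Lia Classical ClassicalEpsilon FunctionalExtensionality PropExtensionality.
Open Scope R_scope.

Section H.
Variable Om : Type.
Variable A : (Om -> Prop) -> Prop.
Hypothesis HA : sigma_algebra Om A.

Lemma A_ext (E F : Om -> Prop) : A E -> (forall w, E w <-> F w) -> A F.
Proof.
  intros HE Hw. replace F with E; auto.
  apply functional_extensionality; intro w; apply propositional_extensionality; auto.
Qed.

Lemma A_empty : A (fun _ => False).
Proof.
  apply (A_ext _ _ (sa_compl _ _ HA _ (sa_full _ _ HA))). intuition.
Qed.

Lemma A_all (E : nat -> Om -> Prop) : (forall n, A (E n)) -> A (fun w => forall n, E n w).
Proof.
  intros H.
  assert (H1 : A (fun w => ~ exists n, ~ E n w)).
  { apply (sa_compl _ _ HA). apply (sa_cunion _ _ HA (fun n w => ~ E n w)).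
    intro n; apply (sa_compl _ _ HA); auto. }
  apply (A_ext _ _ H1). intro w; split.
  - intros Hn n. apply NNPP. intro C. apply Hn. eauto.
  - intros Hn [n Hc]. auto.
Qed.

Lemma A_and (E F : Om -> Prop) : A E -> A F -> A (fun w => E w /\ F w).
Proof.
  intros HE HF.
  assert (H1 := A_all (fun n w => match n with O => E w | _ => F w end)
     ltac:(intros [|n]; auto)).
  apply (A_ext _ _ H1). intro w; split.
  - intros Hn. exact (conj (Hn O) (Hn 1%nat)).
  - intros [a b] [|n]; auto.
Qed.

Lemma A_or (E F : Om -> Prop) : A E -> A F -> A (fun w => E w \/ F w).
Proof.
  intros HE HF.
  assert (H1 := sa_cunion _ _ HA (fun n w => match n with O => E w | _ => F w end)
     ltac:(intros [|n]; auto)).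
  apply (A_ext _ _ H1). intro w; split.
  - intros [[|n] Hn]; auto.
  - intros [a|b]. exists O; auto. exists 1%nat; auto.
Qed.

Lemma A_const_and (P : Prop) (E : Om -> Prop) : (P -> A E) -> A (fun w => P /\ E w).
Proof.
  intros H. destruct (classic P) as [p|np].
  - apply (A_ext _ _ (H p)). intuition.
  - apply (A_ext _ _ A_empty). intuition.
Qed.

Lemma A_const_imp (P : Prop) (E : Om -> Prop) : A E -> A (fun w => P -> E w).
Proof.
  intros H. destruct (classic P) as [p|np].
  - apply (A_ext _ _ H). intuition.
  - apply (A_ext _ _ (sa_full _ _ HA)). intuition.
Qed.

Lemma borel_of_open (g : Om -> R) :
  (forall U, open_set U -> A (fun w => U (g w))) -> borel_fun A g.
Proof.
  intros H B HB. induction HB.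
  - auto.
  - apply (sa_compl _ _ HA); auto.
  - apply (sa_cunion _ _ HA (fun n w => U n (g w))); auto.
Qed.

Lemma small_inv (eps : R) : 0 < eps -> exists m : nat, / (INR m + 1) < eps.
Proof.
  intros He. destruct (archimed_cor1 eps He) as [N [H1 H2]].
  exists N. apply Rle_lt_trans with (/ INR N); auto.
  apply Rinv_le_contravar. apply lt_0_INR; auto. lra.
Qed.

Lemma inv_pos (m : nat) : 0 < / (INR m + 1).
Proof. apply Rinv_0_lt_compat. pose proof (pos_INR m). lra. Qed.

Lemma borel_limit (f : nat -> Om -> R) (g : Om -> R) :
  (forall n, borel_fun A (f n)) ->
  (forall w eps, 0 < eps -> exists N, forall n, (N <= n)%nat -> Rabs (f n w - g w) < eps) ->
  borel_fun A g.
Proof.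
  intros Hf Hcv. apply borel_of_open. intros U HU.
  set (Um := fun (m : nat) (x : R) => forall z, Rabs (z - x) < / (INR m + 1) -> U z).
  assert (HUm : forall m n, A (fun w => Um m (f n w))).
  { intros m n.
    set (V := fun x => exists z, Rabs (z - x) < / (INR m + 1) /\ ~ U z).
    assert (HV : open_set V).
    { intros x [z [h1 h2]]. 
      assert (hp : 0 < / (INR m + 1) - Rabs (z - x)) by lra.
      exists (mkposreal _ hp). intros y hy. unfold disc in hy; simpl in hy.
      exists z; split; auto.
      pose proof (Rabs_triang (z - x) (x - y)).
      replace (z - x + (x - y)) with (z - y) in H by ring.
      rewrite Rabs_minus_sym in hy. lra. }
    apply (A_ext _ _ (Hf n _ (borelR_compl _ (borelR_open _ HV)))).
    intro w; unfold V, Um; split.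
    - intros h z hz. apply NNPP; intro C. apply h. eauto.
    - intros h [z [h1 h2]]. auto. }
  assert (HS : A (fun w => exists m, exists N, forall n, (N <= n)%nat -> Um m (f n w))).
  { apply (sa_cunion _ _ HA (fun m w => exists N, forall n, (N <= n)%nat -> Um m (f n w))).
    intro m. apply (sa_cunion _ _ HA (fun N w => forall n, (N <= n)%nat -> Um m (f n w))).
    intro N. apply A_all. intro n. apply A_const_imp. auto. }
  apply (A_ext _ _ HS). intro w; split.
  - intros [m [N H]].
    destruct (Hcv w _ (inv_pos m)) as [N' HN'].
    apply (H (max N N')). lia.
    rewrite Rabs_minus_sym. apply HN'. lia.
  - intros Hu. destruct (HU _ Hu) as [del Hdel].
    assert (hd : 0 < del / 2) by (destruct del; simpl; lra).
    destruct (small_inv _ hd) as [m Hm].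
    destruct (Hcv w _ (inv_pos m)) as [N HN].
    exists m, N. intros n Hn z Hz. apply Hdel. unfold disc.
    pose proof (HN n Hn).
    pose proof (Rabs_triang (z - f n w) (f n w - g w)).
    replace (z - f n w + (f n w - g w)) with (z - g w) in H0 by ring.
    lra.
Qed.


Variable X : Om -> Type.
Variable d : forall w, X w -> X w -> R.
Variable L : section X -> Prop.
Hypothesis Hd : forall w, is_metric (d w).
Hypothesis Ha : forall x y, L x -> L y -> borel_fun A (fun w => d w (x w) (y w)).

Lemma L1 : prop_b A d L -> closed_pw_limits d L.
Proof.
  intros Hb x y Hx Hc. apply Hb. intros z Hz.
  apply (borel_limit (fun n w => d w (z w) (x n w))).
  - intro n. apply Ha; auto.
  - intros w eps He. destruct (Hc w eps He) as [N HN]. exists N. intros n Hn.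
    specialize (HN n Hn). destruct (Hd w) as [h0 [h1 [h2 h3]]].
    pose proof (h3 (z w) (x n w) (y w)). pose proof (h3 (z w) (y w) (x n w)).
    rewrite (h2 (y w) (x n w)) in H0.
    unfold Rabs; destruct Rcase_abs; lra.
Qed.

Lemma L2 : prop_b A d L -> closed_countable_gluing A L.
Proof.
  intros Hb P x y HP Hcov Hdis Hx Hy. apply Hb. intros z Hz B HB.
  assert (H1 : A (fun w => exists n, P n w /\ B (d w (z w) (x n w)))).
  { apply (sa_cunion _ _ HA (fun n w => P n w /\ B (d w (z w) (x n w)))).
    intro n. apply A_and; auto. apply Ha; auto. }
  apply (A_ext _ _ H1). intro w; split.
  - intros [n [h1 h2]]. rewrite (Hy n w h1). auto.
  - intros h. destruct (Hcov w) as [n hn]. exists n. rewrite <- (Hy n w hn). auto.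
Qed.

Lemma L3 (x0 : section X) : L x0 -> closed_countable_gluing A L -> closed_finite_gluing A L.
Proof.
  intros Hx0 Hcg N P x y HP Hcov Hdis Hx Hy.
  apply (Hcg (fun n w => (n < N)%nat /\ P n w)
             (fun n => if Compare_dec.lt_dec n N then x n else x0)).
  - intro n. apply A_const_and. auto.
  - intro w. destruct (Hcov w) as [n hn]. eauto.
  - intros n m w [a b] [c e]. eauto.
  - intro n. destruct (Compare_dec.lt_dec n N); auto.
  - intros n w [a b]. destruct (Compare_dec.lt_dec n N); [|lia]. auto.
Qed.

Lemma L4 (x0 : section X) : L x0 -> closed_pw_limits d L -> closed_finite_gluing A L ->
  closed_countable_gluing A L.
Proof.
  intros Hx0 Hl Hf P x y HP Hcov Hdis Hx Hy.
  set (idx := fun w => proj1_sig (constructive_indefinite_description _ (Hcov w))).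
  assert (Hidx : forall w, P (idx w) w).
  { intro w. unfold idx. destruct constructive_indefinite_description; simpl; auto. }
  set (z := fun (N : nat) (w : Om) => if Compare_dec.lt_dec (idx w) N then x (idx w) w else x 0%nat w).
  apply (Hl z).
  - intro N.
    apply (Hf (S N) (fun n w => ((n < N)%nat /\ P n w) \/
                                 (n = N /\ forall m, (m < N)%nat -> ~ P m w))
              (fun n => if Compare_dec.lt_dec n N then x n else x 0%nat)).
    + intros n _. apply A_or; apply A_const_and; auto. intros _.
      apply A_all. intro m. apply A_const_imp. apply (sa_compl _ _ HA). auto.
    + intro w. destruct (Compare_dec.lt_dec (idx w) N).
      * exists (idx w). split. lia. left; auto.
      * exists N. split. lia. right. split; auto. intros m hm hP.
        pose proof (Hdis _ _ _ hP (Hidx w)). lia.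
    + intros n m w _ _ [[a b]|[a b]] [[c e]|[c e]].
      * eauto.
      * exfalso. subst. eapply e; eauto.
      * exfalso. subst. eapply b; eauto.
      * lia.
    + intros n _. destruct (Compare_dec.lt_dec n N); auto.
    + intros n w _ [[a b]|[a b]].
      * pose proof (Hdis _ _ _ b (Hidx w)). unfold z.
        destruct (Compare_dec.lt_dec (idx w) N); [|lia]. destruct (Compare_dec.lt_dec n N); [|lia].
        rewrite H. auto.
      * subst. unfold z. destruct (Compare_dec.lt_dec (idx w) N).
        { exfalso. eapply b; eauto. }
        destruct (Compare_dec.lt_dec N N); [lia|]. auto.
  - intros w eps He. exists (S (idx w)). intros n Hn. unfold z.
    destruct (Compare_dec.lt_dec (idx w) n); [|lia]. rewrite <- (Hy _ _ (Hidx w)).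
    destruct (Hd w) as [h0 [h1 _]]. rewrite (proj2 (h1 (y w) (y w)) eq_refl). auto.
Qed.

Lemma least_nat (Q : nat -> Prop) (n : nat) : Q n -> exists m, Q m /\ forall k, (k < m)%nat -> ~ Q k.
Proof.
  revert n. induction n as [n IH] using (well_founded_induction Wf_nat.lt_wf). intros Hn.
  destruct (classic (exists k, (k < n)%nat /\ Q k)) as [[k [hk qk]]|C].
  - eauto.
  - exists n. split; auto. intros k hk qk. apply C; eauto.
Qed.

Hypothesis Hc : exists xs : nat -> section X,
          (forall n, L (xs n)) /\
          (forall w (p : X w) eps, 0 < eps -> exists n, d w (xs n w) p < eps).

Lemma L5 : closed_pw_limits d L -> closed_countable_gluing A L -> prop_b A d L.
Proof.
  intros Hl Hcg y Hy. destruct Hc as [xs [Hxs Hdense]].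
  set (Q := fun (k n : nat) (w : Om) => d w (xs n w) (y w) < / (INR k + 1)).
  set (P := fun k n w => Q k n w /\ forall m, (m < n)%nat -> ~ Q k m w).
  assert (Hex : forall k w, exists n, P k n w).
  { intros k w. destruct (Hdense w (y w) _ (inv_pos k)) as [n hn].
    destruct (least_nat (fun n => Q k n w) n hn) as [m hm]. exists m. exact hm. }
  assert (Hdis : forall k n m w, P k n w -> P k m w -> n = m).
  { intros k n m w [a b] [c e]. destruct (Compare_dec.lt_eq_lt_dec n m) as [[h|h]|h]; auto.
    - exfalso; eapply e; eauto.
    - exfalso; eapply b; eauto. }
  set (nk := fun k w => proj1_sig (constructive_indefinite_description _ (Hex k w))).
  assert (Hnk : forall k w, P k (nk k w) w).
  { intros k w. unfold nk. destruct constructive_indefinite_description; simpl; auto. }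
  apply (Hl (fun k w => xs (nk k w) w)).
  - intro k. apply (Hcg (P k) xs).
    + intro n. apply A_and.
      * assert (HO : open_set (fun r => r < / (INR k + 1))).
        { intros r hr. assert (hp : 0 < / (INR k + 1) - r) by lra.
          exists (mkposreal _ hp). intros t ht. unfold disc in ht; simpl in ht.
          pose proof (Rle_abs (t - r)). lra. }
        exact (Hy _ (Hxs n) _ (borelR_open _ HO)).
      * apply A_all. intro m. apply A_const_imp. apply (sa_compl _ _ HA).
        assert (HO : open_set (fun r => r < / (INR k + 1))).
        { intros r hr. assert (hp : 0 < / (INR k + 1) - r) by lra.
          exists (mkposreal _ hp). intros t ht. unfold disc in ht; simpl in ht.
          pose proof (Rle_abs (t - r)). lra. }
        exact (Hy _ (Hxs m) _ (borelR_open _ HO)).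
    + apply Hex.
    + apply Hdis.
    + auto.
    + intros n w hn. f_equal. eapply Hdis; eauto.
  - intros w eps He. destruct (small_inv _ He) as [N HN]. exists N. intros n Hn.
    destruct (Hnk n w) as [h _]. unfold Q in h.
    apply Rlt_le_trans with (1 := h). apply Rle_trans with (/ (INR N + 1)); [|lra].
    apply Rinv_le_contravar. pose proof (pos_INR N); lra.
    apply le_INR in Hn. lra.
Qed.

End H.

Theorem mainTheorem2 (Om : Type) (A : (Om -> Prop) -> Prop)
  (X : Om -> Type) (d : forall w, X w -> X w -> R)
  (L : section X -> Prop)
  (HA : sigma_algebra Om A)
  (Hd : forall w, is_metric (d w))
  (Ha : forall x y, L x -> L y -> borel_fun A (fun w => d w (x w) (y w)))
  (Hc : exists xs : nat -> section X,
          (forall n, L (xs n)) /\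
          (forall w (p : X w) eps, 0 < eps -> exists n, d w (xs n w) p < eps)) :
  (prop_b A d L <-> (closed_pw_limits d L /\ closed_countable_gluing A L)) /\
  (prop_b A d L <-> (closed_pw_limits d L /\ closed_finite_gluing A L)).
Proof.
  pose proof Hc as [xs [Hxs _]].
  split; split.
  - intros Hb. split. apply (L1 Om A HA X d L Hd Ha); auto. apply (L2 Om A HA X d L Ha); auto.
  - intros [h1 h2]. apply (L5 Om A HA X d L Hc); auto.
  - intros Hb. split. apply (L1 Om A HA X d L Hd Ha); auto. apply (L3 Om A HA X L (xs 0%nat)); auto. apply (L2 Om A HA X d L Ha); auto.
  - intros [h1 h2]. apply (L5 Om A HA X d L Hc); auto. apply (L4 Om A HA X d L Hd (xs 0%nat)); auto.
Qed.
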